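(* Let $A$ be a pca over $\omega$, working in ${\sf CZF}$ with the $\Pi\Sigma\mathrm I$ type structure (resp. ${\sf CZF}+{\sf REA}$ with the $\Pi\Sigma\mathrm W\mathrm I$ type structure). Let $\sigma\sim\tau$ and $i\approx_\sigma j$. Then $X_\sigma=X_\tau$ and $F_{\sigma,i}=F_{\tau,j}$.
   Context: Pca over $\omega$: a set $A$ with at least two elements, partial application $ab$ (left-associative), $\mathbf k,\mathbf s$ with $\mathbf kab=a$, $\mathbf sab\downarrow$, $\mathbf sabc\simeq ac(bc)$, and $\mathbf{succ},\mathbf{pred},\mathbf d$, $n\mapsto\bar n$ with $\mathbf{succ}\,\bar n=\overline{n+1}$, $\mathbf{pred}\,\overline{n+1}=\bar n$, $\mathbf d\bar n\bar mab=a$ if $n=m$, $b$ otherwise; $\mathbf0=\bar0,\mathbf1=\bar1$. Pairing $\mathbf p,\mathbf p_0,\mathbf p_1$ with $\mathbf p_i(\mathbf pa_0a_1)=a_i$; $a_i$ denotes $\mathbf p_ia$. Codes: ${\sf N}_n=\mathbf p\bar0\bar n$, ${\sf N}=\mathbf p\bar1\mathbf0$, $\Pi_ab=\mathbf p\bar2(\mathbf pab)$, $\Sigma_ab=\mathbf p\bar3(\mathbf pab)$, $\mathrm I_c(a,b)=\mathbf p\bar4(\mathbf pc(\mathbf pab))$, $\mathrm W_ab=\mathbf p\bar5(\mathbf pab)$. Type structure ($\sim$ on $A$, $\sim_\sigma$ for $\sigma\sim\sigma$), inductively: ${\sf N}_n\sim{\sf N}_n$, $a\sim_{{\sf N}_n}b$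 iff $a=b=\bar m$ with $m<n$; ${\sf N}\sim{\sf N}$, $a\sim_{\sf N}b$ iff $a=b=\bar n$ for some $n$; if $\sigma\sim\tau$ and ($a\sim_\sigma b\Rightarrow ia\sim jb$), then $\Pi_\sigma i\sim\Pi_\tau j$ with $f\sim_{\Pi_\sigma i}g$ iff $fa\sim_{ia}gb$ for all $a\sim_\sigma b$, and $\Sigma_\sigma i\sim\Sigma_\tau j$ with $a\sim_{\Sigma_\sigma i}b$ iff $a_0\sim_\sigma b_0$, $a_1\sim_{ia_0}b_1$; if $\sigma\sim\tau$, $a\sim_\sigma\breve a$, $b\sim_\sigma\breve b$, then $\mathrm I_\sigma(a,b)\sim\mathrm I_\tau(\breve a,\breve b)$ with $c\sim_{\mathrm I_\sigma(a,b)}d$ iff $c=d=\mathbf0$ and $a\sim_\sigma b$. $\Pi\Sigma\mathrm W\mathrm I$ also: if $\sigma\sim\tau$ and ($a\sim_\sigma b\Rightarrow ia\sim jb$) then $\delta=\mathrm W_\sigma i\sim\mathrm W_\tau j$, $\sim_\delta$ least with $c\sim_\delta d$ whenever $c_0\sim_\sigma d_0$ and $c_1p\sim_\delta d_1q$ for all $p\sim_{ic_0}q$. A type is a $\sigma$ with $\sigma\sim\sigma$; $a$ has type $\sigma$ if $a\sim_\sigma a$. For a type $\sigma$, $i\approx_\sigma j$ means $ia\sim jb$ whenever $a\sim_\sigma b$; $i$ is a family of types over $\sigma$ if $i\approx_\sigma i$. $\mathrm{V_{ext}}(A)$: smallest class containing every set $x\subseteq A\times A\times\mathrm{V_{ext}}(A)$.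 Internal pairing: $\{x\}_A=\{\langle\mathbf0,\mathbf0,x\rangle\}$, $\{x,y\}_A=\{\langle\mathbf0,\mathbf0,x\rangle,\langle\mathbf1,\mathbf1,y\rangle\}$, $\langle x,y\rangle_A=\{\langle\mathbf0,\mathbf0,\{x\}_A\rangle,\langle\mathbf1,\mathbf1,\{x,y\}_A\rangle\}$. $\dot n=\{\langle\bar m,\bar m,\dot m\rangle\mid m<n\}$. For $a$ of type $\sigma$, $a^\sigma$: for $\sigma={\sf N}_n,{\sf N}$ and $a=\bar m$, $a^\sigma=\dot m$; $f^{\Pi_\sigma i}=\{\langle a,b,\langle a^\sigma,(fa)^{ia}\rangle_A\rangle\mid a\sim_\sigma b\}$; $a^{\Sigma_\sigma i}=\langle(a_0)^\sigma,(a_1)^{ia_0}\rangle_A$; $c^{\mathrm I_\sigma(a,b)}=0$; $c^{\mathrm W_\sigma i}=\langle(c_0)^\sigma,\{\langle p,q,\langle p^{ic_0},(c_1p)^{\mathrm W_\sigma i}\rangle_A\rangle\mid p\sim_{ic_0}q\}\rangle_A$. For a type $\sigma$ and a family $i$ of types over $\sigma$: $X_\sigma=\{\langle a,b,a^\sigma\rangle\mid a\sim_\sigma b\}$ and $F_{\sigma,i}=\{\langle a,b,\langle a^\sigma,X_{ia}\rangle_A\rangle\mid a\sim_\sigma b\}$. *)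

(* Defs.v *)
(* Metatheory: Rocq's type theory (with classical epsilon),
   sets of V_ext(A) modelled by Aczel-style well-founded trees with
   extensional equality. *)
From Stdlib Require Import ClassicalEpsilon PeanoNat.

Set Implicit Arguments.

Definition ap_gen (T : Type) (app : T -> T -> option T) (x y : option T) : option T :=
  match x, y with
  | Some f, Some a => app f a
  | _, _ => None
  end.

Record PCA := {
  car : Type;
  app : car -> car -> option car;
  kk : car; ss : car; succ : car; pred : car; dd : car;
  pp : car; pp0 : car; pp1 : car;
  num : nat -> car;
  pca_two : exists x y : car, x <> y;
  pca_k : forall a b, ap_gen app (ap_gen app (Some kk) (Some a)) (Some b) = Some a;
  pca_s_def : forall a b, ap_gen app (ap_gen app (Some ss) (Some a)) (Some b) <> None;
  pca_s : forall a b c,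
    ap_gen app (ap_gen app (ap_gen app (Some ss) (Some a)) (Some b)) (Some c)
    = ap_gen app (ap_gen app (Some a) (Some c)) (ap_gen app (Some b) (Some c));
  pca_succ : forall n, app succ (num n) = Some (num (S n));
  pca_pred : forall n, app pred (num (S n)) = Some (num n);
  pca_d : forall n m a b,
    ap_gen app (ap_gen app (ap_gen app (ap_gen app (Some dd) (Some (num n)))
        (Some (num m))) (Some a)) (Some b)
    = Some (if Nat.eqb n m then a else b);
  pca_p0 : forall a0 a1,
    ap_gen app (Some pp0) (ap_gen app (ap_gen app (Some pp) (Some a0)) (Some a1)) = Some a0;
  pca_p1 : forall a0 a1,
    ap_gen app (Some pp1) (ap_gen app (ap_gen app (Some pp) (Some a0)) (Some a1)) = Some a1
}.

(* V_ext(A): sets of triples <a,b,x> with a,b in A and x in V_ext(A)    *)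

Inductive V (A : Type) : Type :=
  sup : forall (I : Type), (I -> A) -> (I -> A) -> (I -> V A) -> V A.
Arguments sup {A} I _ _ _.

Fixpoint Veq (A : Type) (x y : V A) {struct x} : Prop :=
  match x, y with
  | sup Ix fa fb fv, sup Jx ga gb gv =>
      (forall i, exists j, fa i = ga j /\ fb i = gb j /\ Veq (fv i) (gv j)) /\
      (forall j, exists i, fa i = ga j /\ fb i = gb j /\ Veq (fv i) (gv j))
  end.

Section PCAdefs.
Variable P : PCA.
Local Notation A := (car P).
Local Notation ap := (ap_gen (app P)).
Local Notation "` n" := (num P n) (at level 2).

Definition Vempty : V A := sup Empty_set (fun e => match e with end)
  (fun e => match e with end) (fun e => match e with end).

Definition Vsing (x : V A) : V A := sup unit (fun _ => `0) (fun _ => `0) (fun _ => x).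
Definition Vdbl (x y : V A) : V A :=
  sup bool (fun t => if t then `0 else `1) (fun t => if t then `0 else `1)
           (fun t => if t then x else y).
Definition Vpair (x y : V A) : V A := Vdbl (Vsing x) (Vdbl x y).

Definition Vadd (x : V A) (a b : A) (y : V A) : V A :=
  match x with
  | sup Ix fa fb fv =>
      sup (option Ix) (fun o => match o with Some i => fa i | None => a end)
                     (fun o => match o with Some i => fb i | None => b end)
                     (fun o => match o with Some i => fv i | None => y end)
  end.

Fixpoint Vdot (n : nat) : V A :=
  match n with
  | 0 => Vempty
  | S k => Vadd (Vdot k) (`k) (`k) (Vdot k)
  end.

Definition optV (o : option A) (h : A -> V A) : V A :=
  match o with Some x => h x | None => Vempty end.

Definition pairc (a b : option A) : option A := ap (ap (Some (pp P)) a) b.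
Definition codeNn (n : nat) : option A := pairc (Some (`0)) (Some (`n)).
Definition codeN : option A := pairc (Some (`1)) (Some (`0)).
Definition codePi (a b : A) : option A := pairc (Some (`2)) (pairc (Some a) (Some b)).
Definition codeSigma (a b : A) : option A := pairc (Some (`3)) (pairc (Some a) (Some b)).
Definition codeId (c a b : A) : option A :=
  pairc (Some (`4)) (pairc (Some c) (pairc (Some a) (Some b))).
Definition codeW (a b : A) : option A := pairc (Some (`5)) (pairc (Some a) (Some b)).

Definition rel := A -> A -> Prop.

Definition apprel (R : rel) (u v w z : A) : Prop :=
  exists x y, app P u v = Some x /\ app P w z = Some y /\ R x y.

(* the least relation ~_delta for delta = W_sigma i, given ~_sigma = Rs and
   the relations S a b (= ~_{i a}, for a ~_sigma b) *)
Inductive Wrel (Rs : rel) (S : A -> A -> rel) : rel :=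
  | Wrel_intro : forall c d c0 c1 d0 d1,
      app P (pp0 P) c = Some c0 -> app P (pp1 P) c = Some c1 ->
      app P (pp0 P) d = Some d0 -> app P (pp1 P) d = Some d1 ->
      Rs c0 d0 ->
      (forall p q, S c0 d0 p q -> apprel (Wrel Rs S) c1 p d1 q) ->
      Wrel Rs S c d.

(* The type structure, as the (small) inductive-recursive definition
   encoded by an indexed inductive family:
     Ty withW s t R I  means  s ~ t, where R is ~_s and I : a |-> a^s
   (both computed from the left code s by the defining clauses; I is
   constrained only on elements of type s).
   withW = false : the Pi Sigma I type structure;
   withW = true  : the Pi Sigma W I type structure. *)
Inductive Ty (withW : bool) : A -> A -> rel -> (A -> V A) -> Prop :=
  | Ty_Nn : forall n c (I : A -> V A),
      codeNn n = Some c ->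
      (forall m, m < n -> Veq (I (`m)) (Vdot m)) ->
      Ty withW c c (fun a b => exists m, m < n /\ a = `m /\ b = `m) I
  | Ty_N : forall c (I : A -> V A),
      codeN = Some c ->
      (forall m, Veq (I (`m)) (Vdot m)) ->
      Ty withW c c (fun a b => exists m, a = `m /\ b = `m) I
  | Ty_Pi : forall s t i j Rs Is (S : A -> A -> rel) (J : A -> A -> A -> V A)
                   c c' (I : A -> V A),
      Ty withW s t Rs Is ->
      (forall a b, Rs a b -> exists x y, app P i a = Some x /\ app P j b = Some y /\
                                         Ty withW x y (S a b) (J a b)) ->
      codePi s i = Some c -> codePi t j = Some c' ->
      (forall f, (forall a b, Rs a b -> apprel (S a b) f a f b) ->
         Veq (I f) (sup {ab : A * A | Rs (fst ab) (snd ab)}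
                        (fun ab => fst (proj1_sig ab)) (fun ab => snd (proj1_sig ab))
                        (fun ab => Vpair (Is (fst (proj1_sig ab)))
                                   (optV (app P f (fst (proj1_sig ab)))
                                         (J (fst (proj1_sig ab)) (snd (proj1_sig ab))))))) ->
      Ty withW c c' (fun f g => forall a b, Rs a b -> apprel (S a b) f a g b) I
  | Ty_Sigma : forall s t i j Rs Is (S : A -> A -> rel) (J : A -> A -> A -> V A)
                   c c' (I : A -> V A),
      Ty withW s t Rs Is ->
      (forall a b, Rs a b -> exists x y, app P i a = Some x /\ app P j b = Some y /\
                                         Ty withW x y (S a b) (J a b)) ->
      codeSigma s i = Some c -> codeSigma t j = Some c' ->
      (forall a a0 a1, app P (pp0 P) a = Some a0 -> app P (pp1 P) a = Some a1 ->
         Rs a0 a0 -> S a0 a0 a1 a1 ->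
         Veq (I a) (Vpair (Is a0) (J a0 a0 a1))) ->
      Ty withW c c'
        (fun a b => exists a0 a1 b0 b1,
            app P (pp0 P) a = Some a0 /\ app P (pp1 P) a = Some a1 /\
            app P (pp0 P) b = Some b0 /\ app P (pp1 P) b = Some b1 /\
            Rs a0 b0 /\ S a0 b0 a1 b1) I
  | Ty_Id : forall s t Rs Is a a' b b' c c' (I : A -> V A),
      Ty withW s t Rs Is -> Rs a a' -> Rs b b' ->
      codeId s a b = Some c -> codeId t a' b' = Some c' ->
      (forall x, x = `0 -> Rs a b -> Veq (I x) Vempty) ->
      Ty withW c c' (fun x y => x = `0 /\ y = `0 /\ Rs a b) I
  | Ty_W : forall s t i j Rs Is (S : A -> A -> rel) (J : A -> A -> A -> V A)
                   c c' (I : A -> V A),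
      withW = true ->
      Ty withW s t Rs Is ->
      (forall a b, Rs a b -> exists x y, app P i a = Some x /\ app P j b = Some y /\
                                         Ty withW x y (S a b) (J a b)) ->
      codeW s i = Some c -> codeW t j = Some c' ->
      (forall e e0 e1, Wrel Rs S e e ->
         app P (pp0 P) e = Some e0 -> app P (pp1 P) e = Some e1 ->
         Veq (I e) (Vpair (Is e0)
            (sup {pq : A * A | S e0 e0 (fst pq) (snd pq)}
                 (fun pq => fst (proj1_sig pq)) (fun pq => snd (proj1_sig pq))
                 (fun pq => Vpair (J e0 e0 (fst (proj1_sig pq)))
                                  (optV (app P e1 (fst (proj1_sig pq))) I))))) ->
      Ty withW c c' (Wrel Rs S) I.

Definition sim (withW : bool) (s t : A) : Prop := exists R I, Ty withW s t R I.

(* the decoding (~_s, a |-> a^s) of a type s (arbitrary if s is not a type) *)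
Definition decode (withW : bool) (s : A) : rel * (A -> V A) :=
  epsilon (inhabits ((fun _ _ : A => False), (fun _ : A => Vempty)))
          (fun d => Ty withW s s (fst d) (snd d)).

Definition simrel (withW : bool) (s : A) : rel := fst (decode withW s).
Definition interp (withW : bool) (s : A) : A -> V A := snd (decode withW s).

Definition approx (withW : bool) (s i j : A) : Prop :=
  forall a b, simrel withW s a b -> apprel (sim withW) i a j b.

Definition Xset (withW : bool) (s : A) : V A :=
  sup {ab : A * A | simrel withW s (fst ab) (snd ab)}
      (fun ab => fst (proj1_sig ab)) (fun ab => snd (proj1_sig ab))
      (fun ab => interp withW s (fst (proj1_sig ab))).

Definition Fset (withW : bool) (s i : A) : V A :=
  sup {ab : A * A | simrel withW s (fst ab) (snd ab)}
      (fun ab => fst (proj1_sig ab)) (fun ab => snd (proj1_sig ab))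
      (fun ab => Vpair (interp withW s (fst (proj1_sig ab)))
                       (optV (app P i (fst (proj1_sig ab))) (Xset withW))).

End PCAdefs.

(* Main.v *)
Require Import Defs.
From Stdlib Require Import ClassicalEpsilon PeanoNat Lia.
Set Implicit Arguments.

Lemma Veq_refl (A : Type) (x : V A) : Veq x x.
Proof. induction x as [I fa fb fv IH]; simpl; split; intro k; exists k; auto. Qed.

Lemma Veq_sym (A : Type) (x y : V A) : Veq x y -> Veq y x.
Proof.
  revert y; induction x as [I fa fb fv IH]; intros [J ga gb gv] [H1 H2]; simpl; split.
  - intro j; destruct (H2 j) as (i & e1 & e2 & h); exists i; auto.
  - intro i; destruct (H1 i) as (j & e1 & e2 & h); exists j; auto.
Qed.

Lemma Veq_trans (A : Type) (x y z : V A) : Veq x y -> Veq y z -> Veq x z.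
Proof.
  revert y z; induction x as [I fa fb fv IH];
    intros [J ga gb gv] [K ha hb hv] [H1 H2] [G1 G2]; simpl; split.
  - intro i; destruct (H1 i) as (j & e1 & e2 & h); destruct (G1 j) as (k & f1 & f2 & g).
    exists k; repeat split; try congruence; eauto.
  - intro k; destruct (G2 k) as (j & f1 & f2 & g); destruct (H2 j) as (i & e1 & e2 & h).
    exists i; repeat split; try congruence; eauto.
Qed.

Lemma Veq_sup_sub (A : Type) (Q1 Q2 : A * A -> Prop) (h1 h2 : A * A -> V A) :
  (forall ab, Q1 ab <-> Q2 ab) -> (forall ab, Q1 ab -> Veq (h1 ab) (h2 ab)) ->
  Veq (sup {ab | Q1 ab} (fun ab => fst (proj1_sig ab)) (fun ab => snd (proj1_sig ab))
           (fun ab => h1 (proj1_sig ab)))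
      (sup {ab | Q2 ab} (fun ab => fst (proj1_sig ab)) (fun ab => snd (proj1_sig ab))
           (fun ab => h2 (proj1_sig ab))).
Proof.
  intros E H; simpl; split.
  - intros [ab q]; exists (exist _ ab (proj1 (E ab) q)); simpl; auto.
  - intros [ab q]; exists (exist _ ab (proj2 (E ab) q)); simpl; split; auto; split; auto.
    apply H. apply E; auto.
Qed.

Section Basics.
Variable P : PCA.
Local Notation A := (car P).

Lemma Vsing_cong (x x' : V A) : Veq x x' -> Veq (Vsing P x) (Vsing P x').
Proof. intros H; simpl; split; intros []; exists tt; auto. Qed.

Lemma Vdbl_cong (x x' y y' : V A) : Veq x x' -> Veq y y' -> Veq (Vdbl P x y) (Vdbl P x' y').
Proof. intros H1 H2; simpl; split; intros [|]; [exists true|exists false|exists true|exists false]; auto. Qed.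

Lemma Vpair_cong (x x' y y' : V A) : Veq x x' -> Veq y y' -> Veq (Vpair P x y) (Vpair P x' y').
Proof. intros; unfold Vpair; apply Vdbl_cong; [apply Vsing_cong|apply Vdbl_cong]; auto. Qed.

Lemma num_inj n m : num P n = num P m -> n = m.
Proof.
  intro E. destruct (pca_two P) as (x & y & Hxy).
  pose proof (pca_d P n m x y) as H. rewrite E in H.
  rewrite (pca_d P m m x y) in H. rewrite Nat.eqb_refl in H.
  destruct (Nat.eqb_spec n m); auto. congruence.
Qed.

Lemma pair_inv x o c : pairc P (Some x) o = Some c ->
  exists y, o = Some y /\ app P (pp0 P) c = Some x /\ app P (pp1 P) c = Some y.
Proof.
  destruct o as [y|]; unfold pairc; intro H.
  - exists y; split; auto.
    pose proof (pca_p0 P x y) as H0; pose proof (pca_p1 P x y) as H1.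
    rewrite H in H0, H1; simpl in *; auto.
  - destruct (ap_gen (app P) (Some (pp P)) (Some x)); simpl in H; discriminate.
Qed.

Arguments pair_inv {x o c}.

Inductive cd := CNn (n : nat) | CN | CPi (a b : A) | CSig (a b : A) | CId (c a b : A) | CW (a b : A).
Definition codeof (d : cd) : option A :=
  match d with
  | CNn n => codeNn P n | CN => codeN P | CPi a b => codePi P a b
  | CSig a b => codeSigma P a b | CId c a b => codeId P c a b | CW a b => codeW P a b
  end.

Lemma codeof_inj d1 d2 c : codeof d1 = Some c -> codeof d2 = Some c -> d1 = d2.
Proof.
  intros H1 H2.
  assert (D : forall d, codeof d = Some c -> exists k, app P (pp0 P) c = Some (num P k) /\
     match d with
     | CNn n => k = 0 /\ app P (pp1 P) c = Some (num P n)
     | CN => k = 1 /\ app P (pp1 P) c = Some (num P 0)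
     | CPi a b => k = 2 /\ exists c1, app P (pp1 P) c = Some c1 /\ app P (pp0 P) c1 = Some a /\ app P (pp1 P) c1 = Some b
     | CSig a b => k = 3 /\ exists c1, app P (pp1 P) c = Some c1 /\ app P (pp0 P) c1 = Some a /\ app P (pp1 P) c1 = Some b
     | CId c0 a b => k = 4 /\ exists c1 c2, app P (pp1 P) c = Some c1 /\ app P (pp0 P) c1 = Some c0 /\ app P (pp1 P) c1 = Some c2 /\ app P (pp0 P) c2 = Some a /\ app P (pp1 P) c2 = Some b
     | CW a b => k = 5 /\ exists c1, app P (pp1 P) c = Some c1 /\ app P (pp0 P) c1 = Some a /\ app P (pp1 P) c1 = Some b
     end).
  { intros [n| |a b|a b|c0 a b|a b]; simpl; unfold codeNn, codeN, codePi, codeSigma, codeId, codeW; intro H.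
    - destruct (pair_inv H) as (y & e & h0 & h1); injection e; intros; subst; eauto.
    - destruct (pair_inv H) as (y & e & h0 & h1); injection e; intros; subst; eauto.
    - destruct (pair_inv H) as (y & e & h0 & h1). destruct (pair_inv e) as (z & e' & g0 & g1).
      injection e'; intros; subst; eauto 10.
    - destruct (pair_inv H) as (y & e & h0 & h1). destruct (pair_inv e) as (z & e' & g0 & g1).
      injection e'; intros; subst; eauto 10.
    - destruct (pair_inv H) as (y & e & h0 & h1). destruct (pair_inv e) as (z & e' & g0 & g1).
      destruct (pair_inv e') as (u & e'' & k0 & k1).
      injection e''; intros; subst; eauto 20.
    - destruct (pair_inv H) as (y & e & h0 & h1). destruct (pair_inv e) as (z & e' & g0 & g1).
      injection e'; intros; subst; eauto 10. }
  destruct (D d1 H1) as (k1 & t1 & M1). destruct (D d2 H2) as (k2 & t2 & M2).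
  rewrite t1 in t2; injection t2; intro E; apply num_inj in E; subst k2.
  destruct d1, d2; simpl in *; try (destruct M1 as [M1 _]; destruct M2 as [M2 _]; subst; discriminate);
  repeat match goal with H : _ /\ _ |- _ => destruct H | H : exists _, _ |- _ => destruct H end;
  repeat match goal with H1 : ?x = Some ?a, H2 : ?x = Some ?b |- _ =>
     rewrite H1 in H2; injection H2; clear H2; intro; subst end;
  repeat match goal with H1 : ?x = Some ?a, H2 : ?x = Some ?b |- _ =>
     rewrite H1 in H2; injection H2; clear H2; intro; subst end; auto.
  all: try (f_equal; apply num_inj; congruence).
Qed.

End Basics.
Section Ind.
Variable P : PCA.
Variable w : bool.
Local Notation A := (car P).
Local Notation TY := (@Ty P w).

Definition FamP (Q : A -> A -> rel P -> (A -> V A) -> Prop) (i j : A) (Rs : rel P)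
  (S : A -> A -> rel P) (J : A -> A -> A -> V A) :=
  forall a b, Rs a b -> exists x y, app P i a = Some x /\ app P j b = Some y /\ Q x y (S a b) (J a b).

Definition PiRel (Rs : rel P) (S : A -> A -> rel P) : rel P :=
  fun f g => forall a b, Rs a b -> apprel (S a b) f a g b.
Definition SigRel (Rs : rel P) (S : A -> A -> rel P) : rel P :=
  fun a b => exists a0 a1 b0 b1,
            app P (pp0 P) a = Some a0 /\ app P (pp1 P) a = Some a1 /\
            app P (pp0 P) b = Some b0 /\ app P (pp1 P) b = Some b1 /\
            Rs a0 b0 /\ S a0 b0 a1 b1.
Definition IdRel (Rs : rel P) (a b : A) : rel P := fun x y => x = num P 0 /\ y = num P 0 /\ Rs a b.

Definition PiI (Rs : rel P) (Is : A -> V A) (S : A -> A -> rel P) (J : A -> A -> A -> V A) (I : A -> V A) :=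
      (forall f, (forall a b, Rs a b -> apprel (S a b) f a f b) ->
         Veq (I f) (sup {ab : A * A | Rs (fst ab) (snd ab)}
                        (fun ab => fst (proj1_sig ab)) (fun ab => snd (proj1_sig ab))
                        (fun ab => Vpair P (Is (fst (proj1_sig ab)))
                                   (optV P (app P f (fst (proj1_sig ab)))
                                         (J (fst (proj1_sig ab)) (snd (proj1_sig ab))))))).
Definition SigI (Rs : rel P) (Is : A -> V A) (S : A -> A -> rel P) (J : A -> A -> A -> V A) (I : A -> V A) :=
      (forall a a0 a1, app P (pp0 P) a = Some a0 -> app P (pp1 P) a = Some a1 ->
         Rs a0 a0 -> S a0 a0 a1 a1 ->
         Veq (I a) (Vpair P (Is a0) (J a0 a0 a1))).
Definition WI (Rs : rel P) (Is : A -> V A) (S : A -> A -> rel P) (J : A -> A -> A -> V A) (I : A -> V A) :=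
      (forall e e0 e1, Wrel Rs S e e ->
         app P (pp0 P) e = Some e0 -> app P (pp1 P) e = Some e1 ->
         Veq (I e) (Vpair P (Is e0)
            (sup {pq : A * A | S e0 e0 (fst pq) (snd pq)}
                 (fun pq => fst (proj1_sig pq)) (fun pq => snd (proj1_sig pq))
                 (fun pq => Vpair P (J e0 e0 (fst (proj1_sig pq)))
                                  (optV P (app P e1 (fst (proj1_sig pq))) I))))).

Lemma Ty_ind2 (Q : A -> A -> rel P -> (A -> V A) -> Prop)
  (HNn : forall n c (I : A -> V A), codeNn P n = Some c ->
      (forall m, m < n -> Veq (I (num P m)) (Vdot P m)) ->
      Q c c (fun a b => exists m, m < n /\ a = num P m /\ b = num P m) I)
  (HN : forall c (I : A -> V A), codeN P = Some c ->
      (forall m, Veq (I (num P m)) (Vdot P m)) ->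
      Q c c (fun a b => exists m, a = num P m /\ b = num P m) I)
  (HPi : forall s t i j Rs Is S J c c' I,
      TY s t Rs Is -> Q s t Rs Is -> FamP TY i j Rs S J -> FamP Q i j Rs S J ->
      codePi P s i = Some c -> codePi P t j = Some c' -> PiI Rs Is S J I ->
      Q c c' (PiRel Rs S) I)
  (HSig : forall s t i j Rs Is S J c c' I,
      TY s t Rs Is -> Q s t Rs Is -> FamP TY i j Rs S J -> FamP Q i j Rs S J ->
      codeSigma P s i = Some c -> codeSigma P t j = Some c' -> SigI Rs Is S J I ->
      Q c c' (SigRel Rs S) I)
  (HId : forall s t Rs Is a a' b b' c c' (I : A -> V A),
      TY s t Rs Is -> Q s t Rs Is -> Rs a a' -> Rs b b' ->
      codeId P s a b = Some c -> codeId P t a' b' = Some c' ->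
      (forall x, x = num P 0 -> Rs a b -> Veq (I x) (Vempty P)) ->
      Q c c' (IdRel Rs a b) I)
  (HW : forall s t i j Rs Is S J c c' I, w = true ->
      TY s t Rs Is -> Q s t Rs Is -> FamP TY i j Rs S J -> FamP Q i j Rs S J ->
      codeW P s i = Some c -> codeW P t j = Some c' -> WI Rs Is S J I ->
      Q c c' (Wrel Rs S) I) :
  forall s t R I, TY s t R I -> Q s t R I.
Proof.
  fix IH 5. intros s t R I D. destruct D.
  - apply HNn; assumption.
  - apply HN; assumption.
  - apply (HPi s t i j Rs Is S J c c' I D (IH _ _ _ _ D) H); try assumption.
    intros a b r. destruct (H a b r) as (x & y & h1 & h2 & d).
    exists x, y. split; [exact h1|split; [exact h2|exact (IH _ _ _ _ d)]].
  - apply (HSig s t i j Rs Is S J c c' I D (IH _ _ _ _ D) H); try assumption.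
    intros a b r. destruct (H a b r) as (x & y & h1 & h2 & d).
    exists x, y. split; [exact h1|split; [exact h2|exact (IH _ _ _ _ d)]].
  - apply (HId s t Rs Is a a' b b' c c' I D (IH _ _ _ _ D)); assumption.
  - apply (HW s t i j Rs Is S J c c' I H D (IH _ _ _ _ D) H0); try assumption.
    intros a b r. destruct (H0 a b r) as (x & y & h1 & h2 & d).
    exists x, y. split; [exact h1|split; [exact h2|exact (IH _ _ _ _ d)]].
Qed.

End Ind.

Ltac reify e := lazymatch e with
 | codeNn ?P ?n => constr:(@CNn P n)
 | codeN ?P => constr:(@CN P)
 | codePi ?P ?a ?b => constr:(@CPi P a b)
 | codeSigma ?P ?a ?b => constr:(@CSig P a b)
 | codeId ?P ?c ?a ?b => constr:(@CId P c a b)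
 | codeW ?P ?a ?b => constr:(@CW P a b)
 end.

Ltac codes := repeat match goal with
 | H1 : ?f1 = Some ?c, H2 : ?f2 = Some ?c |- _ =>
   let d1 := reify f1 in let d2 := reify f2 in
   let E := fresh "E" in pose proof (@codeof_inj _ d1 d2 c H1 H2) as E; clear H2;
   first [discriminate E | injection E; intros; subst]
 end.

Ltac disj := repeat (first [left; reflexivity | right]); reflexivity.

Section Main.
Variable P : PCA.
Variable w : bool.
Local Notation A := (car P).
Local Notation TY := (@Ty P w).

Definition EQ (R : rel P) (I : A -> V A) (R' : rel P) (I' : A -> V A) :=
  (forall a b, R a b <-> R' a b) /\ (forall a, R a a -> Veq (I a) (I' a)).
Definition PER (R : rel P) := (forall a b, R a b -> R b a) /\ (forall a b c, R a b -> R b c -> R a c).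
Definition shares (s t x y : A) := s = x \/ s = y \/ t = x \/ t = y.
Definition Inv (s t : A) (R : rel P) (I : A -> V A) :=
  PER R /\ forall x y R' I', TY x y R' I' -> shares s t x y -> EQ R I R' I'.

Lemma EQ_sym R I R' I' : EQ R I R' I' -> EQ R' I' R I.
Proof.
  intros [H1 H2]; split; [intros; symmetry; auto|intros a h; apply Veq_sym, H2, H1, h].
Qed.
Lemma EQ_trans R I R' I' R'' I'' : EQ R I R' I' -> EQ R' I' R'' I'' -> EQ R I R'' I''.
Proof.
  intros [H1 H2] [G1 G2]; split.
  - intros a b; rewrite H1; auto.
  - intros a h; eapply Veq_trans; [apply H2, h|apply G2, H1, h].
Qed.

Lemma PER_l {R a b} : PER R -> R a b -> R a a.
Proof. intros [s t] h; eauto. Qed.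
Lemma PER_r {R a b} : PER R -> R a b -> R b b.
Proof. intros [s t] h; eauto. Qed.


Lemma Wrel_ind2 (Rs : rel P) (S : A -> A -> rel P) (Q : A -> A -> Prop)
  (H : forall c d c0 c1 d0 d1,
      app P (pp0 P) c = Some c0 -> app P (pp1 P) c = Some c1 ->
      app P (pp0 P) d = Some d0 -> app P (pp1 P) d = Some d1 ->
      Rs c0 d0 ->
      (forall p q, S c0 d0 p q -> apprel (Wrel Rs S) c1 p d1 q) ->
      (forall p q, S c0 d0 p q -> apprel Q c1 p d1 q) -> Q c d) :
  forall c d, Wrel Rs S c d -> Q c d.
Proof.
  fix IH 3. intros c d D. destruct D as [c d c0 c1 d0 d1 e1 e2 e3 e4 r h].
  apply (H c d c0 c1 d0 d1 e1 e2 e3 e4 r h).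
  intros p q x. destruct (h p q x) as (u & v & h1 & h2 & d').
  exists u, v. split; [exact h1|split; [exact h2|exact (IH _ _ d')]].
Qed.

Lemma Wrel_mono (Rs : rel P) (S : A -> A -> rel P) (Rs' : rel P) (S' : A -> A -> rel P) :
  (forall a b, Rs a b -> Rs' a b) -> (forall a b, Rs a b -> forall p q, S' a b p q -> S a b p q) ->
  forall c d, Wrel Rs S c d -> Wrel Rs' S' c d.
Proof.
  intros H1 H2. apply Wrel_ind2.
  intros c d c0 c1 d0 d1 e1 e2 e3 e4 r _ h.
  apply (Wrel_intro c d e1 e2 e3 e4 (H1 _ _ r)).
  intros p q x. apply h. apply (H2 _ _ r _ _ x).
Qed.

Lemma Wrel_inv {Rs : rel P} {S : A -> A -> rel P} {c d} : Wrel Rs S c d ->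
  exists c0 c1 d0 d1, app P (pp0 P) c = Some c0 /\ app P (pp1 P) c = Some c1 /\
    app P (pp0 P) d = Some d0 /\ app P (pp1 P) d = Some d1 /\ Rs c0 d0 /\
    (forall p q, S c0 d0 p q -> apprel (Wrel Rs S) c1 p d1 q).
Proof. intros H; destruct H; do 4 eexists; eauto 10. Qed.

Lemma app_det (f a x y : A) : app P f a = Some x -> app P f a = Some y -> x = y.
Proof. congruence. Qed.

Section Fam.
Variables (i j : A) (Rs : rel P) (S : A -> A -> rel P) (J : A -> A -> A -> V A).
Hypothesis HRs : PER Rs.
Hypothesis F1 : FamP Inv i j Rs S J.
Hypothesis F1T : FamP TY i j Rs S J.

Lemma fam_per a b : Rs a b -> PER (S a b).
Proof. intro r; destruct (F1 r) as (x & y & _ & _ & [h _]); exact h. Qed.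

Lemma mem_share {a b x2 y2 R2 I2} : Rs a b -> TY x2 y2 R2 I2 ->
  (app P i a = Some x2 \/ app P i a = Some y2 \/ app P j b = Some x2 \/ app P j b = Some y2) ->
  EQ (S a b) (J a b) R2 I2.
Proof.
  intros r D h. destruct (F1 r) as (x & y & hx & hy & [_ U]).
  apply (U _ _ _ _ D). unfold shares.
  destruct h as [h|[h|[h|h]]]; [left|right;left|right;right;left|right;right;right]; congruence.
Qed.

Lemma fam_T a b : Rs a b -> exists x y, app P i a = Some x /\ app P j b = Some y /\ TY x y (S a b) (J a b).
Proof. intro r; exact (F1T r). Qed.

Lemma intra {a b a' b'} : Rs a b -> Rs a' b' -> Rs a a' -> EQ (S a b) (J a b) (S a' b') (J a' b').
Proof.
  intros r1 r2 r3.
  assert (r4 : Rs a' a') by (apply (PER_r HRs r3)).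
  destruct (F1T r3) as (x1 & y1 & hx1 & hy1 & D1).
  destruct (F1T r4) as (x2 & y2 & hx2 & hy2 & D2).
  destruct (F1T r2) as (x3 & y3 & hx3 & hy3 & D3).
  eapply EQ_trans; [apply (mem_share r1 D1); auto|].
  eapply EQ_trans; [apply (mem_share r3 D2); auto|].
  apply (mem_share r4 D3); auto.
Qed.

Lemma cross i2 j2 Rs2 S2 J2 : FamP TY i2 j2 Rs2 S2 J2 -> (forall a b, Rs a b -> Rs2 a b) ->
  (i = i2 \/ i = j2 \/ j = i2 \/ j = j2) ->
  forall a b, Rs a b -> EQ (S a b) (J a b) (S2 a b) (J2 a b).
Proof.
  intros F2 HR m a b r. destruct (F2 a b (HR _ _ r)) as (x & y & hx & hy & D).
  destruct m as [m|[m|[m|m]]]; [subst i2|subst j2|subst i2|subst j2].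
  - apply (mem_share r D); auto.
  - assert (rb : Rs b b) by apply (PER_r HRs r).
    eapply EQ_trans; [apply (intra r rb r)|]. apply (mem_share rb D); auto.
  - assert (ra : Rs a a) by apply (PER_l HRs r).
    eapply EQ_trans; [apply (intra r ra ra)|]. apply (mem_share ra D); auto.
  - apply (mem_share r D); auto.
Qed.


Lemma EQl {R I R' I' a b} : EQ R I R' I' -> R a b -> R' a b.
Proof. intros [h _]; apply h. Qed.
Lemma EQr {R I R' I' a b} : EQ R I R' I' -> R' a b -> R a b.
Proof. intros [h _]; apply h. Qed.

Lemma pi_per : PER (PiRel Rs S).
Proof.
  split.
  - intros f g H a b r. assert (r' : Rs b a) by (apply HRs; auto).
    destruct (H b a r') as (x & y & hx & hy & hs). exists y, x. split; [exact hy|split; [exact hx|]].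
    apply (fam_per r). apply (EQl (intra r' r r')). exact hs.
  - intros f g h H1 H2 a b r. assert (ra : Rs a a) by apply (PER_l HRs r).
    destruct (H1 a a ra) as (x & y & hx & hy & hs).
    destruct (H2 a b r) as (y' & z & hy' & hz & hs').
    rewrite hy in hy'; injection hy'; intros <-.
    exists x, z. split; [exact hx|split; [exact hz|]].
    apply (proj2 (fam_per r) _ y); auto. apply (EQl (intra ra r ra)); auto.
Qed.

Lemma sig_per : PER (SigRel Rs S).
Proof.
  split.
  - intros a b (a0 & a1 & b0 & b1 & h1 & h2 & h3 & h4 & r & hs).
    assert (r' : Rs b0 a0) by (apply HRs; auto).
    exists b0, b1, a0, a1. do 4 (split; [assumption|]). split; [assumption|].
    apply (EQl (intra r r' r)). apply (fam_per r); auto.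
  - intros a b c (a0 & a1 & b0 & b1 & h1 & h2 & h3 & h4 & r & hs)
      (b0' & b1' & c0 & c1 & g1 & g2 & g3 & g4 & r2 & hs2).
    rewrite h3 in g1; injection g1; intros <-. rewrite h4 in g2; injection g2; intros <-.
    assert (r3 : Rs a0 c0) by (eapply HRs; eauto).
    assert (ra : Rs a0 a0) by apply (PER_l HRs r).
    assert (rb : Rs b0 a0) by (apply HRs; auto).
    exists a0, a1, c0, c1. do 4 (split; [assumption|]). split; [assumption|].
    apply (proj2 (fam_per r3) _ b1).
    + apply (EQl (intra r r3 ra)); auto.
    + apply (EQl (intra r2 r3 rb)); auto.
Qed.

Lemma w_per : PER (Wrel Rs S).
Proof.
  split.
  - apply Wrel_ind2. intros c d c0 c1 d0 d1 e1 e2 e3 e4 r _ h.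
    assert (r' : Rs d0 c0) by (apply HRs; auto).
    apply (Wrel_intro d c e3 e4 e1 e2 r').
    intros p q x. assert (x' : S c0 d0 q p).
    { apply (fam_per r). apply (EQl (intra r' r r')); auto. }
    destruct (h q p x') as (u & v & hu & hv & hh). exists v, u; auto.
  - intros a b c H; revert c; revert a b H.
    apply (Wrel_ind2 (Q := fun a b => forall c, Wrel Rs S b c -> Wrel Rs S a c)).
    intros c d c0 c1 d0 d1 e1 e2 e3 e4 r _ h e H2.
    destruct H2 as [d' e d0' d1' e0 e1' g1 g2 g3 g4 r2 h2].
    rewrite e3 in g1; injection g1; intros <-. rewrite e4 in g2; injection g2; intros <-.
    assert (r3 : Rs c0 e0) by (eapply HRs; eauto).
    assert (ra : Rs c0 c0) by apply (PER_l HRs r).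
    assert (rb : Rs d0 c0) by (apply HRs; auto).
    apply (Wrel_intro c e e1 e2 g3 g4 r3).
    intros p q x.
    assert (x1 : S c0 d0 p q) by (apply (EQr (intra r r3 ra)); auto).
    assert (x2 : S d0 e0 q q).
    { apply (EQr (intra r2 r3 rb)). apply (PER_r (fam_per r3) x). }
    destruct (h p q x1) as (u & v & hu & hv & hh).
    destruct (h2 q q x2) as (v' & z & hv' & hz & hh2).
    rewrite hv in hv'; injection hv'; intros <-.
    exists u, z; split; [auto|split; [auto|]]. apply hh; auto.
Qed.

Section U.
Variables (i2 j2 : A) (Rs2 : rel P) (S2 : A -> A -> rel P) (J2 : A -> A -> A -> V A).
Variables (Is Is2 I I2 : A -> V A).
Hypothesis F2T : FamP TY i2 j2 Rs2 S2 J2.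
Hypothesis HB : EQ Rs Is Rs2 Is2.
Hypothesis Hm : i = i2 \/ i = j2 \/ j = i2 \/ j = j2.

Lemma CR {a b} : Rs a b -> EQ (S a b) (J a b) (S2 a b) (J2 a b).
Proof. apply (cross F2T); auto. intros; apply (EQl HB); auto. Qed.

Lemma pi_U : PiI Rs Is S J I -> PiI Rs2 Is2 S2 J2 I2 -> EQ (PiRel Rs S) I (PiRel Rs2 S2) I2.
Proof.
  intros HI HI2.
  assert (Hiff : forall f g, PiRel Rs S f g <-> PiRel Rs2 S2 f g).
  { intros f g; split; intros H a b r.
    - assert (r' : Rs a b) by apply (EQr HB r).
      destruct (H a b r') as (x & y & hx & hy & hs). exists x, y; repeat split; auto.
      apply (EQl (CR r')); auto.
    - destruct (H a b (EQl HB r)) as (x & y & hx & hy & hs). exists x, y; repeat split; auto.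
      apply (EQr (CR r)); auto. }
  split; [exact Hiff|].
  intros f Hf. eapply Veq_trans; [apply HI; exact Hf|].
  eapply Veq_trans; [|apply Veq_sym, HI2, Hiff, Hf].
  apply (@Veq_sup_sub _ (fun ab => Rs (fst ab) (snd ab)) (fun ab => Rs2 (fst ab) (snd ab))
    (fun ab => Vpair P (Is (fst ab)) (optV P (app P f (fst ab)) (J (fst ab) (snd ab))))
    (fun ab => Vpair P (Is2 (fst ab)) (optV P (app P f (fst ab)) (J2 (fst ab) (snd ab))))).
  - intros [a b]; simpl; split; [apply (EQl HB)|apply (EQr HB)].
  - intros [a b] r; simpl in *. apply Vpair_cong.
    + apply (proj2 HB). apply (PER_l HRs r).
    + assert (r' : Rs b a) by (apply HRs; auto).
      destruct (Hf a b r) as (x & y & hx & hy & hs).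
      destruct (Hf b a r') as (y' & x' & hy' & hx' & hs').
      rewrite hx in hx'; injection hx'; intros <-. rewrite hy in hy'; injection hy'; intros <-.
      rewrite hx; simpl. apply (proj2 (CR r)).
      apply (PER_l (fam_per r) (b:=y)); auto.
Qed.

Lemma sig_U : SigI Rs Is S J I -> SigI Rs2 Is2 S2 J2 I2 -> EQ (SigRel Rs S) I (SigRel Rs2 S2) I2.
Proof.
  intros HI HI2.
  assert (Hiff : forall a b, SigRel Rs S a b <-> SigRel Rs2 S2 a b).
  { intros a b; split; intros (a0 & a1 & b0 & b1 & h1 & h2 & h3 & h4 & r & hs).
    - exists a0, a1, b0, b1; do 4 (split; [assumption|]). split; [apply (EQl HB r)|].
      apply (EQl (CR r)); auto.
    - assert (r' : Rs a0 b0) by apply (EQr HB r).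
      exists a0, a1, b0, b1; do 4 (split; [assumption|]). split; [auto|].
      apply (EQr (CR r')); auto. }
  split; [exact Hiff|].
  intros a Ha. pose proof Ha as (a0 & a1 & b0 & b1 & h1 & h2 & h3 & h4 & r & hs).
  rewrite h1 in h3; injection h3; intros <-. rewrite h2 in h4; injection h4; intros <-.
  eapply Veq_trans; [apply (HI _ _ _ h1 h2 r hs)|].
  eapply Veq_trans; [|apply Veq_sym, (HI2 _ _ _ h1 h2 (EQl HB r) (EQl (CR r) hs))].
  apply Vpair_cong; [apply (proj2 HB _ r)|apply (proj2 (CR r) _ hs)].
Qed.

Lemma w_U : WI Rs Is S J I -> WI Rs2 Is2 S2 J2 I2 -> EQ (Wrel Rs S) I (Wrel Rs2 S2) I2.
Proof.
  intros HI HI2.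
  assert (M1 : forall c d, Wrel Rs S c d -> Wrel Rs2 S2 c d).
  { apply Wrel_mono; [intros; apply (EQl HB); auto|].
    intros a b r p q x; apply (EQr (CR r)); auto. }
  assert (M2 : forall c d, Wrel Rs2 S2 c d -> Wrel Rs S c d).
  { apply Wrel_mono; [intros; apply (EQr HB); auto|].
    intros a b r p q x; apply (EQl (CR (EQr HB r))); auto. }
  split; [intros; split; auto|].
  intros e He.
  assert (G : forall c d, Wrel Rs S c d -> Wrel Rs S c c -> Veq (I c) (I2 c)).
  { apply (Wrel_ind2 (Q := fun c d => Wrel Rs S c c -> Veq (I c) (I2 c))).
    intros c d c0 c1 d0 d1 e1 e2 e3 e4 r _ h Hc.
    pose proof Hc as Hc'.
    destruct (Wrel_inv Hc') as (c0' & c1' & c0'' & c1'' & g1 & g2 & g3 & g4 & r2 & h2).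
    rewrite e1 in g1; injection g1; intros <-. rewrite e2 in g2; injection g2; intros <-.
    rewrite e1 in g3; injection g3; intros <-. rewrite e2 in g4; injection g4; intros <-.
    eapply Veq_trans; [apply (HI _ _ _ Hc e1 e2)|].
    eapply Veq_trans; [|apply Veq_sym, (HI2 _ _ _ (M1 _ _ Hc) e1 e2)].
    apply Vpair_cong; [apply (proj2 HB _ r2)|].
    apply (@Veq_sup_sub _ (fun pq => S c0 c0 (fst pq) (snd pq)) (fun pq => S2 c0 c0 (fst pq) (snd pq))
      (fun pq => Vpair P (J c0 c0 (fst pq)) (optV P (app P c1 (fst pq)) I))
      (fun pq => Vpair P (J2 c0 c0 (fst pq)) (optV P (app P c1 (fst pq)) I2))).
    - intros [p q]; simpl; split; [apply (EQl (CR r2))|apply (EQr (CR r2))].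
    - intros [p q] x; simpl in *.
      assert (xp : S c0 c0 p p) by apply (PER_l (fam_per r2) x).
      apply Vpair_cong; [apply (proj2 (CR r2) _ xp)|].
      assert (xp' : S c0 d0 p p) by (apply (EQl (intra r2 r r2)); auto).
      destruct (h p p xp') as (u & v & hu & hv & hh).
      destruct (h2 p p xp) as (u' & v' & hu' & hv' & hh2).
      rewrite hu in hu'; injection hu'; intros <-.
      rewrite hu; simpl. apply hh. apply (PER_l w_per hh2). }
  apply (G e e He He).
Qed.


Lemma w_tr : WI Rs Is S J I -> WI Rs2 Is2 S2 J2 I.
Proof.
  intros HI e e0 e1 He2 h0 h1.
  assert (He : Wrel Rs S e e).
  { revert He2. apply Wrel_mono; [intros; apply (EQr HB); auto|].
    intros a b r p q x; apply (EQl (CR (EQr HB r))); auto. }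
  destruct (Wrel_inv He) as (c0 & c1 & d0 & d1 & g1 & g2 & g3 & g4 & r & _).
  rewrite h0 in g1; injection g1; intros <-.
  rewrite h0 in g3; injection g3; intros <-.
  eapply Veq_trans; [apply (HI _ _ _ He h0 h1)|].
  apply Vpair_cong; [apply (proj2 HB _ r)|].
  apply (@Veq_sup_sub _ (fun pq => S e0 e0 (fst pq) (snd pq)) (fun pq => S2 e0 e0 (fst pq) (snd pq))
      (fun pq => Vpair P (J e0 e0 (fst pq)) (optV P (app P e1 (fst pq)) I))
      (fun pq => Vpair P (J2 e0 e0 (fst pq)) (optV P (app P e1 (fst pq)) I))).
  - intros [p q]; simpl; split; [apply (EQl (CR r))|apply (EQr (CR r))].
  - intros [p q] x; simpl in *.
    assert (xp : S e0 e0 p p) by apply (PER_l (fam_per r) x).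
    apply Vpair_cong; [apply (proj2 (CR r) _ xp)|apply Veq_refl].
Qed.

End U.

End Fam.

End Main.

Section Inv.
Variable P : PCA.
Variable w : bool.
Local Notation A := (car P).
Local Notation TY := (@Ty P w).

Lemma id_aux (Rs Rs0 : rel P) Is Is0 (I I0 : A -> V A) a b a0 b0 :
  PER Rs -> EQ Rs Is Rs0 Is0 -> Rs a a0 -> Rs b b0 ->
  (forall x, x = num P 0 -> Rs a b -> Veq (I x) (Vempty P)) ->
  (forall x, x = num P 0 -> Rs0 a0 b0 -> Veq (I0 x) (Vempty P)) ->
  EQ (IdRel Rs a b) I (IdRel Rs0 a0 b0) I0.
Proof.
  intros [Hs Ht] HB r1 r2 HI HI0.
  assert (E : Rs a b <-> Rs0 a0 b0).
  { split; intro h.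
    - apply (EQl HB). apply (Ht _ a); [apply Hs; auto|]. apply (Ht _ b); auto.
    - apply (Ht _ a0); auto. apply (Ht _ b0); [apply (EQr HB h)|apply Hs; auto]. }
  split.
  - intros x y; unfold IdRel; rewrite E; tauto.
  - intros x (h1 & _ & h3). eapply Veq_trans; [apply HI; auto|].
    apply Veq_sym, HI0; auto; apply E; auto.
Qed.

Lemma Ty_Inv : forall s t R I, TY s t R I -> Inv w s t R I.
Proof.
  apply Ty_ind2.
  - intros n c I e HI. split.
    + split.
      * intros a b (m & h1 & h2 & h3); exists m; auto.
      * intros a b d (m & h1 & h2 & h3) (m' & g1 & g2 & g3); exists m; repeat split; congruence.
    + intros x y R' I' D2 Hsh. destruct D2; destruct Hsh as [E|[E|[E|E]]]; subst; codes;
      ((split; [tauto|]);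
      intros a (m & h1 & -> & _); eapply Veq_trans; [apply HI; auto|];
      apply Veq_sym; auto).
  - intros c I e HI. split.
    + split.
      * intros a b (m & h2 & h3); exists m; auto.
      * intros a b d (m & h2 & h3) (m' & g2 & g3); exists m; repeat split; congruence.
    + intros x y R' I' D2 Hsh. destruct D2; destruct Hsh as [E|[E|[E|E]]]; subst; codes;
      ((split; [tauto|]);
      intros a (m & -> & _); eapply Veq_trans; [apply HI; auto|];
      apply Veq_sym; auto).
  - intros s t i j Rs Is S J c c' I D1 [HRs U1] F1T F1 e1 e2 HI. split.
    + apply (pi_per HRs F1 F1T).
    + intros x y R' I' D2 Hsh. destruct D2; destruct Hsh as [E|[E|[E|E]]]; subst; codes;
      (eapply (pi_U HRs F1 F1T); [eassumption| eapply U1; [eassumption| unfold shares; disj] | disj | exact HI | assumption]).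
  - intros s t i j Rs Is S J c c' I D1 [HRs U1] F1T F1 e1 e2 HI. split.
    + apply (sig_per HRs F1 F1T).
    + intros x y R' I' D2 Hsh. destruct D2; destruct Hsh as [E|[E|[E|E]]]; subst; codes;
      (eapply (sig_U HRs F1 F1T); [eassumption| eapply U1; [eassumption| unfold shares; disj] | disj | exact HI | assumption]).
  - intros s t Rs Is a a' b b' c c' I D1 [HRs U1] ra rb e1 e2 HI. split.
    + split.
      * intros x y (h1 & h2 & h3); repeat split; auto.
      * intros x y z (h1 & h2 & h3) (g1 & g2 & g3); repeat split; auto.
    + intros x y R' I' D2 Hsh. destruct D2; destruct Hsh as [E|[E|[E|E]]]; subst; codes;
      (match goal with |- EQ _ _ (fun _ _ => _ /\ _ /\ ?R2 _ _) _ =>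
        match goal with D : TY _ _ R2 ?Is2 |- _ =>
         assert (HB : EQ Rs Is R2 Is2) by (eapply U1; [exact D | unfold shares; disj]);
         pose proof HRs as [Hsy Htr];
         eapply id_aux; [exact HRs | exact HB | | | exact HI | assumption ];
         repeat match goal with H : R2 _ _ |- _ => apply (EQr HB) in H end; eauto
        end end).
  - intros s t i j Rs Is S J c c' I Hw D1 [HRs U1] F1T F1 e1 e2 HI. split.
    + apply (w_per HRs F1 F1T).
    + intros x y R' I' D2 Hsh. destruct D2; destruct Hsh as [E|[E|[E|E]]]; subst; codes;
      (eapply (w_U HRs F1 F1T); [eassumption| eapply U1; [eassumption| unfold shares; disj] | disj | exact HI | assumption]).
Qed.

End Inv.

Section Sym.
Variable P : PCA.
Variable w : bool.
Local Notation A := (car P).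
Local Notation TY := (@Ty P w).

Lemma famInv {i j : A} {Rs S J} : FamP TY i j Rs S J -> FamP (Inv w) i j Rs S J.
Proof.
  intros F a b r. destruct (F a b r) as (x & y & hx & hy & D). exists x, y; split; [exact hx|split; [exact hy|exact (Ty_Inv D)]].
Qed.

Lemma choose_fam (i j : A) (D : A -> A -> Prop) :
  (forall a b, D a b -> exists x y R I, app P i a = Some x /\ app P j b = Some y /\ TY x y R I) ->
  exists S J, FamP TY i j D S J.
Proof.
  intro H.
  set (SJ := fun a b => epsilon (inhabits ((fun _ _ : A => False), (fun _ : A => Vempty P)))
        (fun d : rel P * (A -> V A) => exists x y, app P i a = Some x /\ app P j b = Some y /\ TY x y (fst d) (snd d))).
  exists (fun a b => fst (SJ a b)), (fun a b => snd (SJ a b)).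
  intros a b r. unfold SJ. apply epsilon_spec.
  destruct (H a b r) as (x & y & R & I & h1 & h2 & d). exists (R, I), x, y; auto.
Qed.

Definition PiIdef (Rs : rel P) (Is : A -> V A) (J : A -> A -> A -> V A) : A -> V A :=
  fun f => sup {ab : A * A | Rs (fst ab) (snd ab)}
                        (fun ab => fst (proj1_sig ab)) (fun ab => snd (proj1_sig ab))
                        (fun ab => Vpair P (Is (fst (proj1_sig ab)))
                                   (optV P (app P f (fst (proj1_sig ab)))
                                         (J (fst (proj1_sig ab)) (snd (proj1_sig ab))))).
Lemma PiIdef_ok Rs Is S J : PiI Rs Is S J (PiIdef Rs Is J).
Proof. intros f _; apply Veq_refl. Qed.

Definition SigIdef (Is : A -> V A) (J : A -> A -> A -> V A) : A -> V A :=
  fun a => match app P (pp0 P) a, app P (pp1 P) a with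
           | Some a0, Some a1 => Vpair P (Is a0) (J a0 a0 a1)
           | _, _ => Vempty P end.
Lemma SigIdef_ok Rs Is S J : SigI Rs Is S J (SigIdef Is J).
Proof. intros a a0 a1 h0 h1 _ _; unfold SigIdef; rewrite h0, h1; apply Veq_refl. Qed.

Lemma Ty_sym : forall s t R I, TY s t R I -> exists R' I', TY t s R' I'.
Proof.
  apply Ty_ind2.
  - intros n c I e HI. do 2 eexists. eapply Ty_Nn; eauto.
  - intros c I e HI. do 2 eexists. eapply Ty_N; eauto.
  - intros s t i j Rs Is S J c c' I D1 (R1 & I1 & D1') F1T F1 e1 e2 HI.
    destruct (Ty_Inv D1) as [HRs U1].
    assert (HB : EQ Rs Is R1 I1) by (apply (U1 _ _ _ _ D1'); unfold shares; disj).
    destruct (choose_fam j i R1) as (S' & J' & F').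
    { intros a b r. assert (r' : Rs b a) by (apply HRs; apply (EQr HB r)).
      destruct (F1 b a r') as (x & y & hx & hy & R' & I' & D). exists y, x, R', I'; auto. }
    do 2 eexists. eapply Ty_Pi with (I := PiIdef R1 I1 J'); [exact D1' | exact F' | exact e2 | exact e1 | apply PiIdef_ok].
  - intros s t i j Rs Is S J c c' I D1 (R1 & I1 & D1') F1T F1 e1 e2 HI.
    destruct (Ty_Inv D1) as [HRs U1].
    assert (HB : EQ Rs Is R1 I1) by (apply (U1 _ _ _ _ D1'); unfold shares; disj).
    destruct (choose_fam j i R1) as (S' & J' & F').
    { intros a b r. assert (r' : Rs b a) by (apply HRs; apply (EQr HB r)).
      destruct (F1 b a r') as (x & y & hx & hy & R' & I' & D). exists y, x, R', I'; auto. }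
    do 2 eexists. eapply Ty_Sigma with (I := SigIdef I1 J'); [exact D1' | exact F' | exact e2 | exact e1 | apply SigIdef_ok].
  - intros s t Rs Is a a' b b' c c' I D1 (R1 & I1 & D1') ra rb e1 e2 HI.
    destruct (Ty_Inv D1) as [HRs U1].
    assert (HB : EQ Rs Is R1 I1) by (apply (U1 _ _ _ _ D1'); unfold shares; disj).
    do 2 eexists. eapply Ty_Id with (I := fun _ => Vempty P); [exact D1' | | | exact e2 | exact e1 | intros; apply Veq_refl].
    + apply (EQl HB); apply HRs; auto.
    + apply (EQl HB); apply HRs; auto.
  - intros s t i j Rs Is S J c c' I Hw D1 (R1 & I1 & D1') F1T F1 e1 e2 HI.
    destruct (Ty_Inv D1) as [HRs U1].
    assert (HB : EQ Rs Is R1 I1) by (apply (U1 _ _ _ _ D1'); unfold shares; disj).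
    destruct (choose_fam j i R1) as (S' & J' & F').
    { intros a b r. assert (r' : Rs b a) by (apply HRs; apply (EQr HB r)).
      destruct (F1 b a r') as (x & y & hx & hy & R' & I' & D). exists y, x, R', I'; auto. }
    do 2 eexists. eapply Ty_W with (I := I); [exact Hw | exact D1' | exact F' | exact e2 | exact e1 | ].
    apply (w_tr HRs (famInv F1T) F1T F' HB); [disj | exact HI].
Qed.

Lemma inv_pi {c u R I t j} : TY c u R I -> codePi P t j = Some c ->
  exists t2 j2 Rs2 Is2 S2 J2, TY t t2 Rs2 Is2 /\ FamP TY j j2 Rs2 S2 J2 /\ codePi P t2 j2 = Some u.
Proof. intros D e; destruct D; codes; do 6 eexists; eauto. Qed.
Lemma inv_sig {c u R I t j} : TY c u R I -> codeSigma P t j = Some c ->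
  exists t2 j2 Rs2 Is2 S2 J2, TY t t2 Rs2 Is2 /\ FamP TY j j2 Rs2 S2 J2 /\ codeSigma P t2 j2 = Some u.
Proof. intros D e; destruct D; codes; do 6 eexists; eauto. Qed.
Lemma inv_w {c u R I t j} : TY c u R I -> codeW P t j = Some c ->
  exists t2 j2 Rs2 Is2 S2 J2, TY t t2 Rs2 Is2 /\ FamP TY j j2 Rs2 S2 J2 /\ codeW P t2 j2 = Some u.
Proof. intros D e; destruct D; codes; do 6 eexists; eauto. Qed.
Lemma inv_id {c u R I t a b} : TY c u R I -> codeId P t a b = Some c ->
  exists t2 Rs2 Is2 a2 b2, TY t t2 Rs2 Is2 /\ Rs2 a a2 /\ Rs2 b b2 /\ codeId P t2 a2 b2 = Some u.
Proof. intros D e; destruct D; codes; do 5 eexists; eauto. Qed.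

Lemma Ty_trans : forall s t R I, TY s t R I -> forall u R' I', TY t u R' I' -> exists R'' I'', TY s u R'' I''.
Proof.
  apply (@Ty_ind2 P w (fun s t R I => forall u R' I', TY t u R' I' -> exists R'' I'', TY s u R'' I'')).
  - intros n c I e HI u R' I' D2. eauto.
  - intros c I e HI u R' I' D2. eauto.
  - intros s t i j Rs Is S J c c' I D1 IH1 F1T F1 e1 e2 HI u R' I' D2.
    destruct (inv_pi D2 e2) as (t2 & j2 & Rs2 & Is2 & S2 & J2 & D2' & F2 & e3).
    destruct (IH1 _ _ _ D2') as (R3 & I3 & D3).
    destruct (Ty_Inv D1) as [HRs U1].
    assert (HB : EQ Rs Is R3 I3) by (apply (U1 _ _ _ _ D3); unfold shares; disj).
    assert (HB2 : EQ Rs Is Rs2 Is2) by (apply (U1 _ _ _ _ D2'); unfold shares; disj).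
    destruct (choose_fam i j2 R3) as (S' & J' & F').
    { intros a b r. assert (r' : Rs a b) by apply (EQr HB r).
      assert (rb : Rs2 b b) by apply (EQl HB2), (PER_r HRs r').
      destruct (F1 a b r') as (x & y & hx & hy & IH).
      destruct (F2 b b rb) as (y' & z & hy' & hz & D).
      rewrite hy in hy'; injection hy'; intros <-.
      destruct (IH _ _ _ D) as (R4 & I4 & D4). exists x, z, R4, I4; auto. }
    do 2 eexists. eapply Ty_Pi with (I := PiIdef R3 I3 J'); [exact D3 | exact F' | exact e1 | exact e3 | apply PiIdef_ok].
  - intros s t i j Rs Is S J c c' I D1 IH1 F1T F1 e1 e2 HI u R' I' D2.
    destruct (inv_sig D2 e2) as (t2 & j2 & Rs2 & Is2 & S2 & J2 & D2' & F2 & e3).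
    destruct (IH1 _ _ _ D2') as (R3 & I3 & D3).
    destruct (Ty_Inv D1) as [HRs U1].
    assert (HB : EQ Rs Is R3 I3) by (apply (U1 _ _ _ _ D3); unfold shares; disj).
    assert (HB2 : EQ Rs Is Rs2 Is2) by (apply (U1 _ _ _ _ D2'); unfold shares; disj).
    destruct (choose_fam i j2 R3) as (S' & J' & F').
    { intros a b r. assert (r' : Rs a b) by apply (EQr HB r).
      assert (rb : Rs2 b b) by apply (EQl HB2), (PER_r HRs r').
      destruct (F1 a b r') as (x & y & hx & hy & IH).
      destruct (F2 b b rb) as (y' & z & hy' & hz & D).
      rewrite hy in hy'; injection hy'; intros <-.
      destruct (IH _ _ _ D) as (R4 & I4 & D4). exists x, z, R4, I4; auto. }
    do 2 eexists. eapply Ty_Sigma with (I := SigIdef I3 J'); [exact D3 | exact F' | exact e1 | exact e3 | apply SigIdef_ok].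
  - intros s t Rs Is a a' b b' c c' I D1 IH1 ra rb e1 e2 HI u R' I' D2.
    destruct (inv_id D2 e2) as (t2 & Rs2 & Is2 & a2 & b2 & D2' & ra2 & rb2 & e3).
    destruct (IH1 _ _ _ D2') as (R3 & I3 & D3).
    destruct (Ty_Inv D1) as [HRs U1].
    assert (HB : EQ Rs Is R3 I3) by (apply (U1 _ _ _ _ D3); unfold shares; disj).
    assert (HB2 : EQ Rs Is Rs2 Is2) by (apply (U1 _ _ _ _ D2'); unfold shares; disj).
    do 2 eexists. eapply Ty_Id with (I := fun _ => Vempty P); [exact D3 | | | exact e1 | exact e3 | intros; apply Veq_refl].
    + apply (EQl HB). apply (proj2 HRs _ a'); auto. apply (EQr HB2); auto.
    + apply (EQl HB). apply (proj2 HRs _ b'); auto. apply (EQr HB2); auto.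
  - intros s t i j Rs Is S J c c' I Hw D1 IH1 F1T F1 e1 e2 HI u R' I' D2.
    destruct (inv_w D2 e2) as (t2 & j2 & Rs2 & Is2 & S2 & J2 & D2' & F2 & e3).
    destruct (IH1 _ _ _ D2') as (R3 & I3 & D3).
    destruct (Ty_Inv D1) as [HRs U1].
    assert (HB : EQ Rs Is R3 I3) by (apply (U1 _ _ _ _ D3); unfold shares; disj).
    assert (HB2 : EQ Rs Is Rs2 Is2) by (apply (U1 _ _ _ _ D2'); unfold shares; disj).
    destruct (choose_fam i j2 R3) as (S' & J' & F').
    { intros a b r. assert (r' : Rs a b) by apply (EQr HB r).
      assert (rb : Rs2 b b) by apply (EQl HB2), (PER_r HRs r').
      destruct (F1 a b r') as (x & y & hx & hy & IH).
      destruct (F2 b b rb) as (y' & z & hy' & hz & D).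
      rewrite hy in hy'; injection hy'; intros <-.
      destruct (IH _ _ _ D) as (R4 & I4 & D4). exists x, z, R4, I4; auto. }
    do 2 eexists. eapply Ty_W with (I := I); [exact Hw | exact D3 | exact F' | exact e1 | exact e3 | ].
    apply (w_tr HRs (famInv F1T) F1T F' HB); [disj | exact HI].
Qed.

Lemma Ty_refl s t R I : TY s t R I -> (exists R' I', TY s s R' I') /\ (exists R' I', TY t t R' I').
Proof.
  intro D. destruct (Ty_sym D) as (R1 & I1 & D1). split.
  - exact (Ty_trans D D1).
  - exact (Ty_trans D1 D).
Qed.

Lemma decode_spec s : (exists R I, TY s s R I) -> TY s s (simrel P w s) (interp P w s).
Proof.
  intros (R & I & D). unfold simrel, interp, decode.
  apply (epsilon_spec (inhabits ((fun _ _ : A => False), (fun _ : A => Vempty P)))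
           (fun d : rel P * (A -> V A) => TY s s (fst d) (snd d))).
  exists (R, I); exact D.
Qed.

Lemma sim_EQ s t : sim P w s t ->
  EQ (simrel P w s) (interp P w s) (simrel P w t) (interp P w t) /\ PER (simrel P w s).
Proof.
  intros (R & I & D). destruct (Ty_refl D) as [Hs Ht].
  pose proof (decode_spec Hs) as Ds. pose proof (decode_spec Ht) as Dt.
  destruct (Ty_Inv Ds) as [Ps Us]. destruct (Ty_Inv Dt) as [Pt Ut].
  split; [|exact Ps].
  eapply EQ_trans; [apply (Us _ _ _ _ D); unfold shares; disj|].
  apply EQ_sym. apply (Ut _ _ _ _ D); unfold shares; disj.
Qed.

Lemma Xset_eq s t : sim P w s t -> Veq (Xset P w s) (Xset P w t).
Proof.
  intro H. destruct (sim_EQ H) as [[E1 E2] Ps]. unfold Xset.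
  apply (@Veq_sup_sub _ (fun ab => simrel P w s (fst ab) (snd ab)) (fun ab => simrel P w t (fst ab) (snd ab))
     (fun ab => interp P w s (fst ab)) (fun ab => interp P w t (fst ab))).
  - intros [a b]; simpl; auto.
  - intros [a b] r; simpl in *. apply E2. apply (PER_l Ps r).
Qed.

End Sym.

Theorem mainTheorem8 :
  forall (P : PCA) (withW : bool) (s t i j : car P),
    sim P withW s t ->
    approx P withW s i j ->
    Veq (Xset P withW s) (Xset P withW t) /\
    Veq (Fset P withW s i) (Fset P withW t j).
Proof.
  intros P w s t i j H Hap. split; [apply Xset_eq; exact H|].
  destruct (sim_EQ H) as [[E1 E2] Ps]. unfold Fset.
  apply (@Veq_sup_sub _ (fun ab => simrel P w s (fst ab) (snd ab)) (fun ab => simrel P w t (fst ab) (snd ab))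
     (fun ab => Vpair P (interp P w s (fst ab)) (optV P (app P i (fst ab)) (Xset P w)))
     (fun ab => Vpair P (interp P w t (fst ab)) (optV P (app P j (fst ab)) (Xset P w)))).
  - intros [a b]; simpl; auto.
  - intros [a b] r; simpl in *. assert (ra : simrel P w s a a) by apply (PER_l Ps r).
    apply Vpair_cong; [apply E2, ra|].
    destruct (Hap a a ra) as (x & y & hx & hy & hs). rewrite hx, hy; simpl.
    apply Xset_eq; exact hs.
Qed.
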